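(* Fix a nondegenerate triangle $E=E_1E_2E_3$ in the real affine plane. Parallel triangles (triangles $D=D_1D_2D_3$ with $D_iD_j\parallel E_iE_j$) are identified, via their barycentric coordinates $(\delta_1,\delta_2,\delta_3)$, with the points of $\mathbb{R}^3$ with $\delta_1+\delta_2+\delta_3\neq 0$; the space of triangles is $\mathbb{R}^3$, i.e. this set extended by formal elements with $\delta_1+\delta_2+\delta_3=0$. Then the operation $+$ on parallel triangles extends to a commutative and associative operation on the space of triangles, and the resulting group is isomorphic to the additive group $\mathbb{R}^3$.
   Context: Here $d=\delta_1+\delta_2+\delta_3$ is the unique nonzero real such that the homothety of ratio $d$ (translation if $d=1$) maps $D_i$ to $E_i$, and $\delta_i/d$ are the barycentric coordinates (with respect to $E$) of the centroid of $D$. For parallel triangles $A,B$, the pre-sum $C=A\boxplus B$ has vertices $C_k=A_iB_j\cap A_jB_i$ for each permutation $(i,j,k)$ of $(1,2,3)$, and $A+B$ is the point reflection of $C$ in its centroid (defined when $C$ is a nondegenerate triangle in the affine plane). *)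

(* Defs.v *)
From HB Require Import structures.
From mathcomp Require Import all_boot all_order all_algebra.
From mathcomp Require Import reals.
Set Implicit Arguments. Unset Strict Implicit. Unset Printing Implicit Defensive.
Import Order.TTheory GRing.Theory Num.Theory.
Local Open Scope ring_scope.

Definition point (R : realType) := 'rV[R]_2.
Definition triangle (R : realType) := 'I_3 -> point R.

Definition cross (R : realType) (u v : point R) : R :=
  u ord0 ord0 * v ord0 ord_max - u ord0 ord_max * v ord0 ord0.

Definition collinear (R : realType) (P Q S : point R) : bool :=
  cross (Q - P) (S - P) == 0.

Definition i0 : 'I_3 := @Ordinal 3 0 isT.
Definition i1 : 'I_3 := @Ordinal 3 1 isT.
Definition i2 : 'I_3 := @Ordinal 3 2 isT.

Definition nondegenerate_tri (R : realType) (T : triangle R) : bool :=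
  ~~ collinear (T i0) (T i1) (T i2).

Definition centroid (R : realType) (T : triangle R) : point R :=
  3%:R^-1 *: (T i0 + T i1 + T i2).

Definition dsum (R : realType) (delta : 'rV[R]_3) : R := \sum_i delta ord0 i.

(* The parallel triangle D with coordinates delta (requires dsum delta != 0):
   its centroid has barycentric coordinates delta_i / d w.r.t. E, and the
   homothety of ratio d (translation if d = 1) maps D_i to E_i, i.e.
   E_i - G_E = d (D_i - G_D). *)
Definition par_tri (R : realType) (E : triangle R) (delta : 'rV[R]_3) : triangle R :=
  let d := dsum delta in
  let G := \sum_i (delta ord0 i / d) *: E i in
  fun i => G + d^-1 *: (E i - centroid E).

Definition is_presum (R : realType) (A B C : triangle R) : Prop :=
  forall i j k : 'I_3, i != j -> j != k -> i != k ->
    [/\ A i != B j, A j != B i,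
        cross (B j - A i) (B i - A j) != 0,
        collinear (A i) (B j) (C k) & collinear (A j) (B i) (C k)].

Definition reflect_centroid (R : realType) (C : triangle R) : triangle R :=
  fun k => 2%:R *: centroid C - C k.

(* Main.v *)
Require Import Defs.
From HB Require Import structures.
From mathcomp Require Import all_boot all_order all_algebra.
From mathcomp Require Import reals.
From mathcomp Require Import ring lra.
From Stdlib Require Import FunctionalExtensionality.
Set Implicit Arguments. Unset Strict Implicit.
Import Order.TTheory GRing.Theory Num.Theory.
Local Open Scope ring_scope.

Lemma sum3 (V : zmodType) (F : 'I_3 -> V) : \sum_i F i = F i0 + F i1 + F i2.
Proof.
rewrite !big_ord_recr big_ord0 /=. rewrite add0r.
by congr (F _ + F _ + F _); apply: val_inj.
Qed.

Lemma ord2_cases (m : 'I_2) : m = ord0 \/ m = ord_max.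
Proof. case: m => [[|[|?]] Hm]; [left|right|by []]; exact: val_inj. Qed.

Lemma ord3_cases (m : 'I_3) : [\/ m = i0, m = i1 | m = i2].
Proof. case: m => [[|[|[|?]]] Hm]; [apply: Or31|apply: Or32|apply: Or33|by []]; exact: val_inj. Qed.

Section S.
Variable R : realType.

Lemma uniq2 (v w x : point R) : cross v x = 0 -> cross w x = 0 -> cross v w != 0 -> x = 0.
Proof.
rewrite /cross => h1 h2 h3; apply/rowP => m; rewrite mxE.
have e0 : x ord0 ord0 = 0.
  apply/eqP; move: h3 => /negbTE h3'; rewrite -[_ == 0]orbF -h3' -mulf_eq0; apply/eqP.
  have -> : x ord0 ord0 * (v ord0 ord0 * w ord0 ord_max - v ord0 ord_max * w ord0 ord0)
    = w ord0 ord0 * (v ord0 ord0 * x ord0 ord_max - v ord0 ord_max * x ord0 ord0)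
      - v ord0 ord0 * (w ord0 ord0 * x ord0 ord_max - w ord0 ord_max * x ord0 ord0) by ring.
  by rewrite h1 h2; ring.
have e1 : x ord0 ord_max = 0.
  apply/eqP; move: h3 => /negbTE h3'; rewrite -[_ == 0]orbF -h3' -mulf_eq0; apply/eqP.
  have -> : x ord0 ord_max * (v ord0 ord0 * w ord0 ord_max - v ord0 ord_max * w ord0 ord0)
    = w ord0 ord_max * (v ord0 ord0 * x ord0 ord_max - v ord0 ord_max * x ord0 ord0)
      - v ord0 ord_max * (w ord0 ord0 * x ord0 ord_max - w ord0 ord_max * x ord0 ord0) by ring.
  by rewrite h1 h2; ring.
by case: (ord2_cases m) => ->.
Qed.
End S.
Section K.
Variable R : realType.
Variables (E : triangle R) (a b : 'rV[R]_3).

Definition P (k : 'I_3) : point R :=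
  \sum_l (((a + b) ord0 l) / (dsum a + dsum b)) *: E l
  + (dsum a + dsum b)^-1 *: (centroid E - E k).

Lemma cross_sub (v x y : point R) : cross v (x - y) = cross v x - cross v y.
Proof. rewrite /cross !mxE; ring. Qed.

Lemma cross_scal (v : point R) c : cross v (c *: v) = 0.
Proof. rewrite /cross !mxE; ring. Qed.

Lemma lineP i j k : dsum a != 0 -> dsum b != 0 -> dsum a + dsum b != 0 ->
  E i + E j + E k = E i0 + E i1 + E i2 ->
  P k - par_tri E a i = (dsum b / (dsum a + dsum b)) *: (par_tri E b j - par_tri E a i).
Proof.
move=> ha hb hab /rowP hE; apply/rowP => m; move: (hE m).
rewrite /P /par_tri /centroid !mxE !summxE !sum3 !mxE.
move: (dsum a) (dsum b) ha hb hab => s t ha hb hab.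
move=> hk.
have -> : E k ord0 m = E i0 ord0 m + E i1 ord0 m + E i2 ord0 m - E i ord0 m - E j ord0 m by rewrite -hk; ring.
field; by rewrite ha hb hab.
Qed.
End K.
Section M.
Variable R : realType.
Variables (E : triangle R) (a b : 'rV[R]_3) (C : triangle R).

Lemma CkP i j k : dsum a != 0 -> dsum b != 0 -> dsum a + dsum b != 0 ->
  E i + E j + E k = E i0 + E i1 + E i2 ->
  collinear (par_tri E a i) (par_tri E b j) (C k) ->
  collinear (par_tri E a j) (par_tri E b i) (C k) ->
  cross (par_tri E b j - par_tri E a i) (par_tri E b i - par_tri E a j) != 0 ->
  C k = P E a b k.
Proof.
move=> ha hb hab hE /eqP c1 /eqP c2 hc.
apply/eqP; rewrite -subr_eq0; apply/eqP.
apply: (uniq2 _ _ hc).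
  have -> : C k - P E a b k = (C k - par_tri E a i) - (P E a b k - par_tri E a i) by rewrite opprB addrA subrK.
  rewrite cross_sub c1.
  by rewrite (lineP ha hb hab hE) cross_scal subr0.
have hE' : E j + E i + E k = E i0 + E i1 + E i2 by rewrite (addrC (E j)).
have -> : C k - P E a b k = (C k - par_tri E a j) - (P E a b k - par_tri E a j) by rewrite opprB addrA subrK.
  rewrite cross_sub c2.
by rewrite (lineP ha hb hab hE') cross_scal subr0.
Qed.
End M.

Theorem corollary1 (R : realType) (E : triangle R) :
  nondegenerate_tri E ->
  exists op : 'rV[R]_3 -> 'rV[R]_3 -> 'rV[R]_3,
    [/\ (forall (a b : 'rV[R]_3) (C : triangle R),
           dsum a != 0 -> dsum b != 0 ->
           is_presum (par_tri E a) (par_tri E b) C -> nondegenerate_tri C ->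
           dsum (op a b) != 0 /\ par_tri E (op a b) = reflect_centroid C),
        commutative op,
        associative op &
        exists f : 'rV[R]_3 -> 'rV[R]_3,
          bijective f /\ forall x y, f (op x y) = f x + f y].
Proof.
move=> _; exists (fun x y => x + y); split.
- move=> a b C ha hb HP _.
  have dab : dsum (a + b) = dsum a + dsum b.
    by rewrite /dsum -big_split; apply: eq_bigr => l _; rewrite mxE.
  have hab : dsum a + dsum b != 0.
    apply/negP => /eqP st0.
    have [_ _ H _ _] := HP i0 i1 i2 isT isT isT.
    move: H; suff -> : par_tri E b i1 - par_tri E a i0 = par_tri E b i0 - par_tri E a i1.
      by rewrite /cross; apply/negP; rewrite negbK; apply/eqP; ring.
    have ht : dsum b = - dsum a by apply/eqP; rewrite -subr_eq0 opprK addrC st0.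
    apply/rowP => m; rewrite /par_tri /centroid !mxE !summxE !sum3 !mxE ht.
    move: (dsum a) ha => s hs; field; by rewrite hs.
  split; first by rewrite dab.
  have HC : forall k, C k = P E a b k.
    move=> k; case: (ord3_cases k) => ->.
    + have [? ? ? c1 c2] := HP i1 i2 i0 isT isT isT.
      apply: (CkP ha hb hab _ c1 c2) => //; rewrite addrC addrA; done.
    + have [? ? ? c1 c2] := HP i0 i2 i1 isT isT isT.
      apply: (CkP ha hb hab _ c1 c2) => //; by rewrite addrAC.
    + have [? ? ? c1 c2] := HP i0 i1 i2 isT isT isT.
      by apply: (CkP ha hb hab _ c1 c2).
  apply: functional_extensionality => k.
  rewrite /reflect_centroid /centroid !HC /P /par_tri /centroid dab.
  apply/rowP => m; rewrite !mxE !summxE !sum3 !mxE.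
  move: (dsum a) (dsum b) hab => s t hst; field; by rewrite hst.
- by move=> x y; rewrite addrC.
- by move=> x y z; rewrite addrA.
- exists id; split; last by [].
  by exists id.
Qed.
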